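(* Let $\gamma_a,\gamma_s>0$, $\sigma_B>0$, $q>0$, $\varepsilon_a>2$, and let $\beta_s$ be the piecewise linear coalbedo described in the context. Let $(T_a,T_s)$ be the maximal solution, defined on $[0,\tau^+)$, of \[ \begin{cases} \gamma_a T_a'=\varepsilon_a\sigma_B|T_s|^3T_s-2\varepsilon_a\sigma_B|T_a|^3T_a,\\ \gamma_s T_s'=-\sigma_B|T_s|^3T_s+\varepsilon_a\sigma_B|T_a|^3T_a+q\beta_s(T_s),\\ T_a(0)=T_a^{(0)}\ge0,\quad T_s(0)=T_s^{(0)}\ge0. \end{cases} \] Let \[ \mathcal E=\Big\{(T_a,T_s)\in[0,\infty)^2:\ \sigma_B T_s^4-q\beta_s(T_s)<\varepsilon_a\sigma_B T_a^4<\tfrac12\varepsilon_a\sigma_B T_s^4\Big\}, \] and let $\mu_*$ be the unique number in $(2^{1/4},\varepsilon_a^{1/4})$ satisfying $\frac{\gamma_s}{\gamma_a}\mu_*=\frac{\varepsilon_a-\mu_*^4}{\varepsilon_a(\mu_*^4-2)}$. Let $\tau_0\in[0,\tau^+)$ be any time such that $(T_a(\tau_0),T_s(\tau_0))\in\mathcal E$. Then there exists $\mu\in(2^{1/4},\mu_* )$ such that $T_s(t)\ge\mu T_a(t)$ for all $t\in[\tau_0,\tau^+)$.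
   Context: The coalbedo is $\beta_s(T)=\beta_{s,-}$ for $T\le T_{s,-}$, $\beta_s(T)=\beta_{s,-}+(\beta_{s,+}-\beta_{s,-})\frac{T-T_{s,-}}{T_{s,+}-T_{s,-}}$ for $T\in[T_{s,-},T_{s,+}]$, and $\beta_s(T)=\beta_{s,+}$ for $T\ge T_{s,+}$, where $T_{s,+}>T_{s,-}>0$ and $\beta_{s,+}>\beta_{s,-}>0$. *)

(* Defs.v *)
From Stdlib Require Import Reals Lra.
From Coquelicot Require Import Coquelicot.
Open Scope R_scope.

(* Piecewise linear coalbedo beta_s with parameters
   T_{s,-} = Tm, T_{s,+} = Tp, beta_{s,-} = bm, beta_{s,+} = bp. *)
Definition coalbedo (Tm Tp bm bp : R) (T : R) : R :=
  if Rle_dec T Tm then bm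
  else if Rle_dec Tp T then bp
  else bm + (bp - bm) * ((T - Tm) / (Tp - Tm)).

Definition rhs_a (eps sig : R) (Ta Ts : R) : R :=
  eps * sig * (Rabs Ts ^ 3 * Ts) - 2 * eps * sig * (Rabs Ta ^ 3 * Ta).

Definition rhs_s (eps sig q : R) (beta : R -> R) (Ta Ts : R) : R :=
  - sig * (Rabs Ts ^ 3 * Ts) + eps * sig * (Rabs Ta ^ 3 * Ta) + q * beta Ts.

Definition is_solution (ga gs eps sig q : R) (beta : R -> R) (Ta0 Ts0 : R)
    (tau : Rbar) (Ta Ts : R -> R) : Prop :=
  Ta 0 = Ta0 /\ Ts 0 = Ts0 /\
  filterlim Ta (at_right 0) (locally (Ta 0)) /\
  filterlim Ts (at_right 0) (locally (Ts 0)) /\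
  (forall t : R, 0 < t -> Rbar_lt t tau ->
     is_derive Ta t (rhs_a eps sig (Ta t) (Ts t) / ga) /\
     is_derive Ts t (rhs_s eps sig q beta (Ta t) (Ts t) / gs)).

Definition is_maximal_solution (ga gs eps sig q : R) (beta : R -> R)
    (Ta0 Ts0 : R) (tau : Rbar) (Ta Ts : R -> R) : Prop :=
  Rbar_lt 0 tau /\
  is_solution ga gs eps sig q beta Ta0 Ts0 tau Ta Ts /\
  (forall (tau' : Rbar) (Ta' Ts' : R -> R),
     Rbar_lt tau tau' ->
     is_solution ga gs eps sig q beta Ta0 Ts0 tau' Ta' Ts' ->
     ~ (forall t : R, 0 <= t -> Rbar_lt t tau -> Ta' t = Ta t /\ Ts' t = Ts t)).

Definition in_E (eps sig q : R) (beta : R -> R) (Ta Ts : R) : Prop :=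
  0 <= Ta /\ 0 <= Ts /\
  sig * Ts ^ 4 - q * beta Ts < eps * sig * Ta ^ 4 /\
  eps * sig * Ta ^ 4 < / 2 * eps * sig * Ts ^ 4.

(* Main.v *)
Require Import Defs.
From Stdlib Require Import Reals Lra Lia Classical.
From Coquelicot Require Import Coquelicot.
Open Scope R_scope.

Definition RC (h : R -> R) (x : R) : Prop :=
  forall e, 0 < e -> exists d, 0 < d /\ forall y, x <= y < x + d -> Rabs (h y - h x) < e.

Lemma deriv_cont (h : R -> R) x l : is_derive h x l ->
  forall e, 0 < e -> exists d, 0 < d /\ forall y, Rabs (y - x) < d -> Rabs (h y - h x) < e.
Proof.
  intros Hd e He. apply is_derive_Reals in Hd.
  destruct (Hd 1 Rlt_0_1) as [dl Hdl].
  assert (Hl : 0 < Rabs l + 1) by (pose proof (Rabs_pos l); lra).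
  exists (Rmin dl (e / (Rabs l + 1))). split.
  { apply Rmin_glb_lt. apply cond_pos. apply Rdiv_lt_0_compat; lra. }
  intros y Hy.
  destruct (Req_dec y x) as [->|Hne].
  { replace (h x - h x) with 0 by ring. rewrite Rabs_R0. lra. }
  assert (H0 : y - x <> 0) by lra.
  assert (Hy1 : Rabs (y - x) < dl) by (eapply Rlt_le_trans; [exact Hy| apply Rmin_l]).
  assert (Hy2 : Rabs (y - x) < e / (Rabs l + 1)) by (eapply Rlt_le_trans; [exact Hy| apply Rmin_r]).
  specialize (Hdl (y - x) H0 Hy1). replace (x + (y - x)) with y in Hdl by ring.
  set (qq := (h y - h x) / (y - x)) in Hdl.
  assert (Hq : h y - h x = qq * (y - x)) by (unfold qq; field; exact H0).
  rewrite Hq, Rabs_mult.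
  assert (Rabs qq < Rabs l + 1).
  { pose proof (Rabs_triang (qq - l) l). replace (qq - l + l) with qq in H by ring. lra. }
  assert (Rabs (y - x) * (Rabs l + 1) < e).
  { apply (Rmult_lt_compat_r (Rabs l + 1)) in Hy2; [|lra].
    replace (e / (Rabs l + 1) * (Rabs l + 1)) with e in Hy2 by (field; lra). lra. }
  pose proof (Rabs_pos qq). pose proof (Rabs_pos (y - x)). nra.
Qed.

Lemma deriv_RC h x l : is_derive h x l -> RC h x.
Proof.
  intros Hd e He. destruct (deriv_cont h x l Hd e He) as [d [Hd0 Hd1]].
  exists d; split; auto. intros y Hy. apply Hd1. rewrite Rabs_right; lra.
Qed.

Lemma deriv_pos_left (h : R -> R) x l : is_derive h x l -> 0 < l ->
  exists d, 0 < d /\ forall y, x - d < y < x -> h y < h x.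
Proof.
  intros Hd Hl. apply is_derive_Reals in Hd.
  destruct (Hd (l/2) ltac:(lra)) as [dl Hdl].
  exists dl. split. apply cond_pos. intros y Hy.
  assert (H0 : y - x <> 0) by lra.
  assert (Hy1 : Rabs (y - x) < dl) by (rewrite Rabs_left; lra).
  specialize (Hdl (y - x) H0 Hy1). replace (x + (y - x)) with y in Hdl by ring.
  set (qq := (h y - h x) / (y - x)) in Hdl.
  assert (Hq : h y - h x = qq * (y - x)) by (unfold qq; field; exact H0).
  apply Rabs_def2 in Hdl. nra.
Qed.

Lemma RC_persist h x : RC h x -> 0 < h x -> exists d, 0 < d /\ forall y, x <= y < x + d -> 0 < h y.
Proof.
  intros Hc Hp. destruct (Hc (h x) Hp) as [d [Hd Hd1]]. exists d; split; auto.
  intros y Hy. specialize (Hd1 y Hy). apply Rabs_def2 in Hd1. lra.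
Qed.

Lemma left_nonneg h t l a : is_derive h t l -> a < t ->
  (forall y, a <= y < t -> 0 < h y) -> 0 <= h t.
Proof.
  intros Hd Ha Hp. destruct (Rle_lt_dec 0 (h t)) as [|Hn]; auto. exfalso.
  destruct (deriv_cont h t l Hd (- h t) ltac:(lra)) as [d [Hd0 Hd1]].
  set (y := Rmax a (t - d/2)).
  assert (a <= y) by apply Rmax_l. assert (t - d/2 <= y) by apply Rmax_r.
  assert (y < t) by (unfold y; apply Rmax_lub_lt; lra).
  specialize (Hd1 y ltac:(rewrite Rabs_left; lra)). apply Rabs_def2 in Hd1.
  specialize (Hp y ltac:(lra)). lra.
Qed.

Lemma zero_pos_deriv h t l a : is_derive h t l -> 0 < l -> h t = 0 -> a < t ->
  (forall y, a <= y < t -> 0 < h y) -> False.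
Proof.
  intros Hd Hl H0 Ha Hp. destruct (deriv_pos_left h t l Hd Hl) as [d [Hd0 Hd1]].
  set (y := Rmax a (t - d/2)).
  assert (a <= y) by apply Rmax_l. assert (t - d/2 <= y) by apply Rmax_r.
  assert (y < t) by (unfold y; apply Rmax_lub_lt; lra).
  specialize (Hd1 y ltac:(lra)). specialize (Hp y ltac:(lra)). lra.
Qed.

Lemma exit_lemma (g1 g2 g3 d1 d2 d3 : R -> R) (t0 ts : R) :
  t0 <= ts ->
  0 < g1 t0 -> 0 < g2 t0 -> 0 < g3 t0 ->
  RC g1 t0 -> RC g2 t0 -> RC g3 t0 ->
  (forall t, t0 < t <= ts -> is_derive g1 t (d1 t) /\ is_derive g2 t (d2 t) /\ is_derive g3 t (d3 t)) ->
  (forall t, t0 < t <= ts -> 0 <= g1 t -> 0 <= g2 t -> 0 <= g3 t ->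
     (g1 t = 0 -> 0 < d1 t) /\ (g2 t = 0 -> 0 < d2 t) /\ (g3 t = 0 -> 0 < d3 t)) ->
  0 < g1 ts /\ 0 < g2 ts /\ 0 < g3 ts.
Proof.
  intros Hle H1 H2 H3 C1 C2 C3 HD HB.
  destruct (Req_dec t0 ts) as [<-|Hlt]; [auto|].
  assert (Hlt' : t0 < ts) by lra. clear Hle Hlt.
  set (P := fun y => 0 < g1 y /\ 0 < g2 y /\ 0 < g3 y).
  set (S := fun x => t0 <= x <= ts /\ forall y, t0 <= y <= x -> P y).
  assert (Sb : bound S) by (exists ts; intros x [Hx _]; lra).
  assert (Sne : exists x, S x) by (exists t0; split; [lra|]; intros y Hy;
     replace y with t0 by lra; unfold P; auto).
  destruct (completeness S Sb Sne) as [t1 [Hub Hlub]].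
  assert (Ht1ts : t1 <= ts) by (apply Hlub; intros x [Hx _]; lra).
  destruct (RC_persist g1 t0 C1 H1) as [e1 [He1 Hp1]].
  destruct (RC_persist g2 t0 C2 H2) as [e2 [He2 Hp2]].
  destruct (RC_persist g3 t0 C3 H3) as [e3 [He3 Hp3]].
  set (e := Rmin e1 (Rmin e2 e3)).
  assert (e <= e1) by apply Rmin_l.
  assert (e <= e2) by (eapply Rle_trans; [apply Rmin_r| apply Rmin_l]).
  assert (e <= e3) by (eapply Rle_trans; [apply Rmin_r| apply Rmin_r]).
  assert (0 < e) by (apply Rmin_glb_lt; [lra| apply Rmin_glb_lt; lra]).
  assert (Ht10 : t0 < t1).
  { set (x := Rmin (t0 + e/2) ts).
    assert (x <= t0 + e/2) by apply Rmin_l. assert (x <= ts) by apply Rmin_r.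
    assert (t0 < x) by (apply Rmin_glb_lt; lra).
    assert (HSx : S x). { split; [lra|]. intros y Hy. split; [apply Hp1|split; [apply Hp2|apply Hp3]]; lra. }
    specialize (Hub x HSx). lra. }
  assert (Hbelow : forall y, t0 <= y < t1 -> P y).
  { intros y Hy. apply NNPP. intro HnP.
    assert (Hu : is_upper_bound S y).
    { intros x [Hx Hx2]. destruct (Rle_lt_dec x y) as [|Hxy]; auto.
      exfalso. apply HnP. apply Hx2. lra. }
    specialize (Hlub y Hu). lra. }
  destruct (HD t1 ltac:(lra)) as [D1 [D2 D3]].
  assert (N1 : 0 <= g1 t1) by (apply (left_nonneg g1 t1 (d1 t1) t0); auto; intros; apply Hbelow; auto).
  assert (N2 : 0 <= g2 t1) by (apply (left_nonneg g2 t1 (d2 t1) t0); auto; intros; apply Hbelow; auto).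
  assert (N3 : 0 <= g3 t1) by (apply (left_nonneg g3 t1 (d3 t1) t0); auto; intros; apply Hbelow; auto).
  destruct (HB t1 ltac:(lra) N1 N2 N3) as [B1 [B2 B3]].
  destruct (Req_dec (g1 t1) 0) as [E1|E1].
  { exfalso. apply (zero_pos_deriv g1 t1 (d1 t1) t0 D1 (B1 E1) E1 Ht10). intros; apply Hbelow; auto. }
  destruct (Req_dec (g2 t1) 0) as [E2|E2].
  { exfalso. apply (zero_pos_deriv g2 t1 (d2 t1) t0 D2 (B2 E2) E2 Ht10). intros; apply Hbelow; auto. }
  destruct (Req_dec (g3 t1) 0) as [E3|E3].
  { exfalso. apply (zero_pos_deriv g3 t1 (d3 t1) t0 D3 (B3 E3) E3 Ht10). intros; apply Hbelow; auto. }
  assert (P1 : 0 < g1 t1) by lra. assert (P2 : 0 < g2 t1) by lra. assert (P3 : 0 < g3 t1) by lra.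
  destruct (Req_dec t1 ts) as [<-|Hne]; [auto|]. exfalso.
  destruct (RC_persist g1 t1 (deriv_RC _ _ _ D1) P1) as [f1 [Hf1 Hq1]].
  destruct (RC_persist g2 t1 (deriv_RC _ _ _ D2) P2) as [f2 [Hf2 Hq2]].
  destruct (RC_persist g3 t1 (deriv_RC _ _ _ D3) P3) as [f3 [Hf3 Hq3]].
  set (f := Rmin f1 (Rmin f2 f3)).
  assert (f <= f1) by apply Rmin_l.
  assert (f <= f2) by (eapply Rle_trans; [apply Rmin_r| apply Rmin_l]).
  assert (f <= f3) by (eapply Rle_trans; [apply Rmin_r| apply Rmin_r]).
  assert (0 < f) by (apply Rmin_glb_lt; [lra| apply Rmin_glb_lt; lra]).
  set (x := Rmin (t1 + f/2) ts).
  assert (x <= t1 + f/2) by apply Rmin_l. assert (x <= ts) by apply Rmin_r.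
  assert (t1 < x) by (apply Rmin_glb_lt; lra).
  assert (HSx : S x).
  { split; [lra|]. intros y Hy. destruct (Rlt_le_dec y t1) as [Hy1|Hy1].
    - apply Hbelow; lra.
    - split; [apply Hq1|split; [apply Hq2|apply Hq3]]; lra. }
  specialize (Hub x HSx). lra.
Qed.

Lemma lin_deriv (f g : R -> R) t a b c df dg : is_derive f t df -> is_derive g t dg ->
  is_derive (fun x => a * f x + b * g x + c) t (a * df + b * dg).
Proof.
  intros Hf Hg.
  replace (a * df + b * dg) with (plus (plus (a * df) (b * dg)) zero)
    by (rewrite plus_zero_r; reflexivity).
  apply (is_derive_plus (fun x => a * f x + b * g x) (fun _ => c)).
  apply (is_derive_plus (fun x => a * f x) (fun x => b * g x)).
  apply is_derive_scal; auto. apply is_derive_scal; auto. exact (@is_derive_const R_AbsRing R_NormedModule c t).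
Qed.

Lemma RC_lin f g x a b c : RC f x -> RC g x -> RC (fun y => a * f y + b * g y + c) x.
Proof.
  intros Hf Hg e He.
  set (k := Rabs a + Rabs b + 1).
  assert (Hk : 0 < k) by (unfold k; pose proof (Rabs_pos a); pose proof (Rabs_pos b); lra).
  destruct (Hf (e / k) ltac:(apply Rdiv_lt_0_compat; lra)) as [d1 [Hd1 Hf1]].
  destruct (Hg (e / k) ltac:(apply Rdiv_lt_0_compat; lra)) as [d2 [Hd2 Hg1]].
  exists (Rmin d1 d2). split. apply Rmin_glb_lt; lra.
  intros y Hy. assert (Rmin d1 d2 <= d1) by apply Rmin_l. assert (Rmin d1 d2 <= d2) by apply Rmin_r.
  specialize (Hf1 y ltac:(lra)). specialize (Hg1 y ltac:(lra)).
  replace (a * f y + b * g y + c - (a * f x + b * g x + c)) with (a * (f y - f x) + b * (g y - g x)) by ring.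
  eapply Rle_lt_trans. apply Rabs_triang. rewrite !Rabs_mult.
  assert (HH : e / k * k = e) by (field; lra).
  pose proof (Rabs_pos a). pose proof (Rabs_pos b).
  pose proof (Rabs_pos (f y - f x)). pose proof (Rabs_pos (g y - g x)).
  assert (Rabs a * Rabs (f y - f x) <= Rabs a * (e / k)) by (apply Rmult_le_compat_l; lra).
  assert (Rabs b * Rabs (g y - g x) <= Rabs b * (e / k)) by (apply Rmult_le_compat_l; lra).
  assert (0 < e / k) by (apply Rdiv_lt_0_compat; lra).
  set (ek := e / k) in *. unfold k in HH.
  assert (Rabs a * ek + Rabs b * ek + ek = e) by (rewrite <- HH; ring). lra.
Qed.

Lemma coalbedo_ge Tm Tp bm bp T : 0 < Tm -> Tm < Tp -> 0 < bm -> bm < bp ->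
  bm <= coalbedo Tm Tp bm bp T.
Proof.
  intros. unfold coalbedo. destruct (Rle_dec T Tm); [lra|]. destruct (Rle_dec Tp T); [lra|].
  assert (0 <= (T - Tm) / (Tp - Tm)) by (apply Rmult_le_pos; [lra| left; apply Rinv_0_lt_compat; lra]).
  nra.
Qed.

Lemma coalbedo_0 Tm Tp bm bp : 0 < Tm -> coalbedo Tm Tp bm bp 0 = bm.
Proof. intros. unfold coalbedo. destruct (Rle_dec 0 Tm); [reflexivity| lra]. Qed.

Lemma root4 x : 0 < x -> Rpower x (/ 4) ^ 4 = x /\ 0 < Rpower x (/4).
Proof.
  intros Hx. split.
  - rewrite <- Rpower_pow. rewrite Rpower_mult.
    replace (/ 4 * INR 4) with 1 by (simpl; field). apply Rpower_1; auto.
    unfold Rpower; apply exp_pos.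
  - unfold Rpower; apply exp_pos.
Qed.

Lemma pow4_lt x y : 0 <= x -> x < y -> x ^ 4 < y ^ 4.
Proof. intros. assert (x*x < y*y) by nra. assert (0 <= x*x) by nra.
  assert (x*x*(x*x) < y*y*(y*y)) by nra.
  replace (x^4) with (x*x*(x*x)) by ring. replace (y^4) with (y*y*(y*y)) by ring. lra. Qed.

Lemma RC_at0 (f : R -> R) : filterlim f (at_right 0) (locally (f 0)) -> RC f 0.
Proof.
  intros Hl e He. apply filterlim_locally with (eps := mkposreal e He) in Hl.
  destruct Hl as [d Hd]. exists d. split; [apply cond_pos|]. intros y Hy.
  destruct (Req_dec y 0) as [->|Hne].
  { replace (f 0 - f 0) with 0 by ring. rewrite Rabs_R0; lra. }
  assert (Hb : ball 0 d y).
  { unfold ball; simpl; unfold AbsRing_ball, abs, minus, plus, opp; simpl.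
    rewrite Rabs_pos_eq; lra. }
  specialize (Hd y Hb ltac:(lra)). revert Hd.
  unfold ball; simpl; unfold AbsRing_ball, abs, minus, plus, opp; simpl. auto.
Qed.

Theorem lemmaA1
  (ga gs sig q eps Tm Tp bm bp Ta0 Ts0 : R)
  (hga : 0 < ga) (hgs : 0 < gs) (hsig : 0 < sig) (hq : 0 < q) (heps : 2 < eps)
  (hT0 : 0 < Tm) (hT : Tm < Tp) (hb0 : 0 < bm) (hb : bm < bp)
  (hTa0 : 0 <= Ta0) (hTs0 : 0 <= Ts0)
  (tau : Rbar) (Ta Ts : R -> R)
  (hsol : is_maximal_solution ga gs eps sig q (coalbedo Tm Tp bm bp)
            Ta0 Ts0 tau Ta Ts)
  (mus : R)
  (hmus1 : Rpower 2 (/ 4) < mus) (hmus2 : mus < Rpower eps (/ 4))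
  (hmus : gs / ga * mus = (eps - mus ^ 4) / (eps * (mus ^ 4 - 2)))
  (tau0 : R) (htau0 : 0 <= tau0) (htau0' : Rbar_lt tau0 tau)
  (hE : in_E eps sig q (coalbedo Tm Tp bm bp) (Ta tau0) (Ts tau0)) :
  exists mu : R, Rpower 2 (/ 4) < mu /\ mu < mus /\
    (forall t : R, tau0 <= t -> Rbar_lt t tau -> Ts t >= mu * Ta t).
Proof.
  destruct hsol as [_ [hs _]]. destruct hs as [hA0 [hS0 [hlimA [hlimS hder]]]].
  destruct hE as [ea [es [e1 e2]]].
  destruct (root4 2 ltac:(lra)) as [r4 rpos].
  set (r := Rpower 2 (/4)) in *.
  set (a0 := Ta tau0) in *. set (s0 := Ts tau0) in *.
  assert (hes : 0 < eps * sig) by nra.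
  assert (Hsa : 2 * a0 ^ 4 < s0 ^ 4).
  { apply (Rmult_lt_reg_l (eps * sig / 2)); [lra|].
    replace (eps * sig / 2 * (2 * a0 ^ 4)) with (eps * sig * a0 ^ 4) by field.
    replace (eps * sig / 2 * s0 ^ 4) with (/ 2 * eps * sig * s0 ^ 4) by field. lra. }
  assert (Hsr : r * a0 < s0).
  { destruct (Rlt_le_dec (r * a0) s0) as [|Hn]; auto. exfalso.
    assert (s0 ^ 4 <= (r * a0) ^ 4) by (apply pow_incr; lra).
    rewrite Rpow_mult_distr, r4 in H. lra. }
  set (w := (s0 - r * a0) / (2 * (a0 + 1))).
  assert (hw : w * (2 * (a0 + 1)) = s0 - r * a0) by (unfold w; field; lra).
  assert (wpos : 0 < w) by (unfold w; apply Rdiv_lt_0_compat; lra).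
  set (dl := Rmin ((mus - r) / 2) w).
  assert (dl1 : dl <= (mus - r) / 2) by apply Rmin_l.
  assert (dl2 : dl <= w) by apply Rmin_r.
  assert (dlp : 0 < dl) by (apply Rmin_glb_lt; lra).
  set (mu := r + dl).
  assert (mu1 : r < mu) by (unfold mu; lra).
  assert (mu2 : mu < mus) by (unfold mu; lra).
  assert (mu3 : mu * a0 < s0).
  { unfold mu. assert (dl * a0 <= w * a0) by (apply Rmult_le_compat_r; lra). nra. }
  exists mu. split; [exact mu1|]. split; [exact mu2|].
  set (K := mu ^ 4). set (M := mus ^ 4).
  assert (HK : 2 < K) by (unfold K; rewrite <- r4; apply pow4_lt; lra).
  assert (HKM : K < M) by (unfold K, M; apply pow4_lt; lra).
  assert (Hkey : gs * mu * eps * (K - 2) <= ga * (eps - K)).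
  { assert (HM : gs * mus * eps * (M - 2) = ga * (eps - M)).
    { fold M in hmus. apply (Rmult_eq_compat_l (ga * (eps * (M - 2)))) in hmus.
      replace (ga * (eps * (M - 2)) * (gs / ga * mus)) with (gs * mus * eps * (M - 2)) in hmus by (field; lra).
      rewrite hmus. field. split; lra. }
    assert (gs * mu * eps * (K - 2) <= gs * mus * eps * (M - 2)).
    { assert (0 < gs * eps) by nra.
      assert (mu * (K - 2) <= mus * (M - 2)) by nra. nra. }
    nra. }
  set (eta := Rmin 1 (q * bm / (2 * (eps * sig)))).
  assert (eta1 : eta <= 1) by apply Rmin_l.
  assert (eta2 : eta <= q * bm / (2 * (eps * sig))) by apply Rmin_r.
  assert (etap : 0 < eta) by (apply Rmin_glb_lt; [lra| apply Rdiv_lt_0_compat; nra]).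
  assert (eta3 : eps * sig * eta <= q * bm / 2).
  { apply (Rmult_le_compat_l (eps * sig)) in eta2; [|lra].
    replace (eps * sig * (q * bm / (2 * (eps * sig)))) with (q * bm / 2) in eta2 by (field; lra). lra. }
  assert (eta4 : eta ^ 4 <= eta).
  { assert (eta * eta <= 1) by nra. assert (eta * eta * eta <= 1) by nra. simpl. nra. }
  assert (RCA : RC Ta tau0 /\ RC Ts tau0).
  { destruct htau0 as [hp|h0].
    - destruct (hder tau0 hp htau0') as [dA dS]. split; eapply deriv_RC; eauto.
    - subst tau0. split; apply RC_at0; auto. }
  destruct RCA as [RCA RCS].
  intros t ht htau.
  set (beta := coalbedo Tm Tp bm bp).
  set (dA := fun u => rhs_a eps sig (Ta u) (Ts u) / ga).
  set (dS := fun u => rhs_s eps sig q beta (Ta u) (Ts u) / gs).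
  destruct (exit_lemma
     (fun u => (-mu) * Ta u + 1 * Ts u + 0)
     (fun u => 0 * Ta u + 1 * Ts u + 0)
     (fun u => 1 * Ta u + 0 * Ts u + eta)
     (fun u => (-mu) * dA u + 1 * dS u)
     (fun u => 0 * dA u + 1 * dS u)
     (fun u => 1 * dA u + 0 * dS u) tau0 t) as [G1 _]; auto.
  - fold a0 s0. lra.
  - fold a0 s0. nra.
  - fold a0. lra.
  - apply RC_lin; auto.
  - apply RC_lin; auto.
  - apply RC_lin; auto.
  - intros u Hu.
    assert (Hut : Rbar_lt u tau) by (apply Rbar_le_lt_trans with (Finite t); [simpl; lra | exact htau]).
    destruct (hder u ltac:(lra) Hut) as [DA DS].
    split; [|split]; apply lin_deriv; auto.
  - intros u Hu N1 N2 N3. unfold dA, dS, rhs_a, rhs_s.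
    set (a := Ta u) in *. set (s := Ts u) in *.
    assert (Hb : bm <= beta s) by (apply coalbedo_ge; auto).
    split; [|split].
    + intros Z. assert (Hs : s = mu * a) by lra.
      assert (ha : 0 <= a) by nra.
      rewrite (Rabs_pos_eq a ha), (Rabs_pos_eq s ltac:(lra)).
      set (bb := beta s). rewrite Hs.
      assert (E : - mu * ((eps * sig * ((mu * a) ^ 3 * (mu * a)) - 2 * eps * sig * (a ^ 3 * a)) / ga) +
        1 * ((- sig * ((mu * a) ^ 3 * (mu * a)) + eps * sig * (a ^ 3 * a) + q * bb) / gs)
        = (sig * a ^ 4 * (ga * (eps - K) - gs * mu * eps * (K - 2)) + ga * q * bb) / (ga * gs))
        by (unfold K; field; lra).
      rewrite E. apply Rdiv_lt_0_compat; [|nra].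
      assert (0 <= sig * a ^ 4 * (ga * (eps - K) - gs * mu * eps * (K - 2))).
      { apply Rmult_le_pos; [|lra]. apply Rmult_le_pos; [lra|]. apply pow_le; lra. }
      assert (0 < ga * q * bb) by (unfold bb; apply Rmult_lt_0_compat; [nra| lra]).
      lra.
    + intros Z. assert (Hs : s = 0) by lra.
      assert (ha : a <= 0) by nra.
      unfold beta. rewrite Hs, coalbedo_0; auto.
      rewrite (Rabs_left1 a ha).
      set (b := - a) in *.
      assert (hb1 : b <= eta) by (unfold b; lra).
      assert (b ^ 4 <= eta ^ 4) by (apply pow_incr; unfold b; lra).
      assert (E : b ^ 3 * a = - b ^ 4) by (unfold b; ring).
      rewrite E. replace (Rabs 0) with 0 by (rewrite Rabs_R0; reflexivity).
      apply Rmult_lt_reg_r with gs; [lra|].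
      replace ((0 * ((eps * sig * (0 ^ 3 * 0) - 2 * eps * sig * (- b ^ 4)) / ga) +
        1 * ((- sig * (0 ^ 3 * 0) + eps * sig * - b ^ 4 + q * bm) / gs)) * gs)
        with (q * bm - eps * sig * b ^ 4) by (field; lra).
      assert (eps * sig * b ^ 4 <= eps * sig * eta) by (apply Rmult_le_compat_l; lra).
      nra.
    + intros Z. assert (Ha : a = - eta) by lra.
      assert (hs : 0 <= s) by lra.
      rewrite Ha, (Rabs_left (- eta) ltac:(lra)), (Rabs_pos_eq s hs).
      apply Rmult_lt_reg_r with ga; [lra|].
      set (bb := beta s).
      rewrite Ropp_involutive.
      match goal with |- _ < ?X => replace X with (eps * sig * s ^ 4 + 2 * eps * sig * eta ^ 4) by (field; lra) end.
      assert (0 <= s ^ 4) by (apply pow_le; lra).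
      assert (0 < eta ^ 4) by (apply pow_lt; lra).
      nra.
  - simpl in G1. lra.
Qed.
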